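(* Let $(X,\sigma)$ be an $F$-distance space and let $T:X\to X$ be a map such that $\sigma(Tx,Ty)\le\lambda\sigma(x,y)$ for some $\lambda\in[0,1)$ and all $x,y\in X$. Then: (1) for every $x_1\in X$, the sequence $\{x_n\}$ defined by $x_{n+1}=Tx_n$ ($n\in\mathbb N$) is Cauchy in $(X,\sigma)$; (2) if $(X,\sigma)$ is complete, then $T$ has a unique fixed point.
   Context: An $F$-distance on a nonempty set $X$ is a function $\sigma:X\times X\to[0,\infty)$ (not assumed symmetric) such that: $\sigma(x,y)=0$ iff $x=y$; and for every $\varepsilon>0$ there exists $\phi(\varepsilon)>0$ such that for all $x,y,z\in X$, if $\sigma(x,y)\le\phi(\varepsilon)$ and $\sigma(y,z)\le\phi(\varepsilon)$ then $\sigma(x,z)\le\varepsilon$ and $\sigma(z,x)\le\varepsilon$. The pair $(X,\sigma)$ is an $F$-distance space. A sequence $\{x_n\}$ converges to $x$ in $(X,\sigma)$ if $\lim_n\sigma(x_n,x)=0=\lim_n\sigma(x,x_n)$; it is Cauchy if $\lim_{n,m\to\infty}\sigma(x_n,x_m)=0$; $(X,\sigma)$ is complete if every Cauchy sequence converges. *)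

(* Defs.v *)
From Stdlib Require Import Reals.
Open Scope R_scope.

Definition is_F_distance {X : Type} (sigma : X -> X -> R) : Prop :=
  (forall x y, 0 <= sigma x y) /\
  (forall x y, sigma x y = 0 <-> x = y) /\
  (forall eps, 0 < eps -> exists phi, 0 < phi /\
     forall x y z, sigma x y <= phi -> sigma y z <= phi ->
       sigma x z <= eps /\ sigma z x <= eps).

Definition F_converges {X : Type} (sigma : X -> X -> R) (x : nat -> X) (l : X) : Prop :=
  Un_cv (fun n => sigma (x n) l) 0 /\ Un_cv (fun n => sigma l (x n)) 0.

Definition F_Cauchy {X : Type} (sigma : X -> X -> R) (x : nat -> X) : Prop :=
  forall eps, 0 < eps -> exists N : nat, forall n m : nat,
    (n >= N)%nat -> (m >= N)%nat -> sigma (x n) (x m) < eps.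

Definition F_complete {X : Type} (sigma : X -> X -> R) : Prop :=
  forall x : nat -> X, F_Cauchy sigma x -> exists l, F_converges sigma x l.

(* Main.v *)
Require Import Defs.
From Stdlib Require Import Reals.
From Stdlib Require Import Lra Lia Arith Wf_nat.
Open Scope R_scope.

Lemma sig_refl {X : Type} (sigma : X -> X -> R) (Hs : is_F_distance sigma) x :
  sigma x x = 0.
Proof. destruct Hs as [_ [H _]]. apply H; reflexivity. Qed.

Lemma chain {X : Type} (sigma : X -> X -> R) (Hs : is_F_distance sigma) :
  forall M eps, 0 < eps -> exists eta, 0 < eta /\
   forall (x : nat -> X) N, (forall n, (n >= N)%nat -> sigma (x n) (x (S n)) <= eta) ->
   forall n j, (n >= N)%nat -> (j <= M)%nat -> sigma (x n) (x (n + j)%nat) <= eps.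
Proof.
  induction M as [|M IH]; intros eps Heps.
  - exists eps; split; [lra|]. intros x N _ n j _ Hj.
    replace (n + j)%nat with n by lia. rewrite (sig_refl sigma Hs). lra.
  - destruct Hs as [Hnn [Hid Hphi]] eqn:E.
    destruct (Hphi eps Heps) as [phi [Hphi0 Hphi1]].
    destruct (IH (Rmin phi eps)) as [eta' [Heta' Hc]].
    { apply Rmin_glb_lt; lra. }
    exists (Rmin eta' phi); split; [apply Rmin_glb_lt; lra|].
    intros x N Hstep n j Hn Hj.
    assert (Hstep' : forall n, (n >= N)%nat -> sigma (x n) (x (S n)) <= eta').
    { intros k Hk. pose proof (Hstep k Hk). pose proof (Rmin_l eta' phi). lra. }
    destruct (Nat.le_gt_cases j M) as [HjM|HjM].
    + pose proof (Hc x N Hstep' n j Hn HjM). pose proof (Rmin_r phi eps). lra.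
    + replace j with (S M) by lia.
      pose proof (Hc x N Hstep' n M Hn (le_n M)) as H1.
      pose proof (Hstep (n + M)%nat ltac:(lia)) as H2.
      pose proof (Rmin_l phi eps). pose proof (Rmin_r eta' phi).
      replace (n + S M)%nat with (S (n + M)) by lia.
      destruct (Hphi1 (x n) (x (n + M)%nat) (x (S (n + M)))) as [R1 _]; [lra|lra|exact R1].
Qed.

Lemma iter_contr {X : Type} (sigma : X -> X -> R) (T : X -> X) lambda
  (Hl : 0 <= lambda) (Hcontr : forall x y, sigma (T x) (T y) <= lambda * sigma x y)
  (x : nat -> X) (Hx : forall n, x (S n) = T (x n)) :
  forall m a b, sigma (x (m + a)%nat) (x (m + b)%nat) <= lambda ^ m * sigma (x a) (x b).
Proof.
  induction m as [|m IH]; intros a b; simpl.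
  - lra.
  - rewrite !Hx. eapply Rle_trans; [apply Hcontr|].
    rewrite Rmult_assoc. apply Rmult_le_compat_l; auto.
Qed.

Theorem mainTheorem2 (X : Type) (sigma : X -> X -> R) (T : X -> X) (lambda : R)
  (HX : inhabited X) (Hsigma : is_F_distance sigma)
  (Hlam : 0 <= lambda < 1)
  (Hcontr : forall x y, sigma (T x) (T y) <= lambda * sigma x y) :
  (forall (x : nat -> X), (forall n, x (S n) = T (x n)) -> F_Cauchy sigma x) /\
  (F_complete sigma -> exists! p : X, T p = p).
Proof.
  pose proof Hsigma as [Hnn [Hid Hphi]].
  assert (Hab : Rabs lambda < 1) by (rewrite Rabs_right; lra).
  assert (Hcau : forall (x : nat -> X), (forall n, x (S n) = T (x n)) -> F_Cauchy sigma x).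
  { intros x Hx eps Heps.
    pose proof (iter_contr sigma T lambda (proj1 Hlam) Hcontr x Hx) as Hit.
    destruct (Hphi (eps/2) ltac:(lra)) as [E [HE HE1]].
    destruct (Hphi E HE) as [phi2 [Hp2 Hp21]].
    destruct (pow_lt_1_zero lambda Hab (phi2 / E) ltac:(apply Rdiv_lt_0_compat; lra))
      as [N0 HN0].
    set (m := S N0).
    assert (Hm : lambda ^ m * E <= phi2).
    { pose proof (HN0 m ltac:(unfold m; lia)) as H.
      rewrite Rabs_right in H by (apply Rle_ge, pow_le; lra).
      apply Rlt_le. apply (Rmult_lt_compat_r E) in H; [|lra].
      unfold Rdiv in H. rewrite Rmult_assoc, Rinv_l in H by lra. lra. }
    destruct (chain sigma Hsigma m (Rmin phi2 E) ltac:(apply Rmin_glb_lt; lra))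
      as [eta [Heta Hch]].
    set (s := sigma (x 0%nat) (x 1%nat)).
    assert (Hs0 : 0 <= s) by apply Hnn.
    destruct (pow_lt_1_zero lambda Hab (eta / (s + 1)) ltac:(apply Rdiv_lt_0_compat; lra))
      as [N HN].
    assert (Hstep : forall n, (n >= N)%nat -> sigma (x n) (x (S n)) <= eta).
    { intros n Hn. pose proof (Hit n 0%nat 1%nat) as H.
      rewrite !Nat.add_0_r in H. replace (n + 1)%nat with (S n) in H by lia.
      pose proof (HN n Hn) as H2.
      rewrite Rabs_right in H2 by (apply Rle_ge, pow_le; lra).
      assert (0 <= lambda ^ n) by (apply pow_le; lra).
      apply (Rmult_lt_compat_r (s+1)) in H2; [|lra].
      unfold Rdiv in H2. rewrite Rmult_assoc, Rinv_l in H2 by lra.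
      fold s in H. nra. }
    assert (Hmain : forall k n, (n >= N)%nat -> sigma (x n) (x (n + k)%nat) <= E).
    { intro k. induction k as [k IHk] using (well_founded_induction lt_wf).
      intros n Hn.
      destruct (Nat.le_gt_cases k m) as [Hk|Hk].
      - pose proof (Hch x N Hstep n k Hn Hk). pose proof (Rmin_r phi2 E). lra.
      - destruct (Nat.le_exists_sub m k ltac:(lia)) as [k' [Hk' _]].
        pose proof (IHk k' ltac:(lia) n Hn) as H1.
        pose proof (Hit m n (n + k')%nat) as H2.
        pose proof (Hch x N Hstep n m Hn (le_n m)) as H3.
        pose proof (Rmin_l phi2 E).
        assert (0 <= lambda ^ m) by (apply pow_le; lra).
        replace (n + k)%nat with (m + (n + k'))%nat by lia.
        rewrite (Nat.add_comm m n) in H2. replace (m + (n + k'))%nat with (n + m + k')%nat in H2 by lia.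
        destruct (Hp21 (x n) (x (n + m)%nat) (x (n + m + k')%nat)) as [R1 _]; [lra|nra|].
        replace (m + (n + k'))%nat with (n + m + k')%nat by lia. exact R1. }
    exists N. intros n p Hn Hp.
    destruct (Nat.le_gt_cases n p) as [Hnp|Hnp].
    - destruct (Nat.le_exists_sub n p Hnp) as [k [Hk _]].
      pose proof (Hmain k n Hn) as H. replace (n + k)%nat with p in H by lia.
      assert (sigma (x n) (x p) <= eps/2); [|lra].
      destruct (HE1 (x n) (x p) (x p) H) as [R1 _]; [rewrite (sig_refl sigma Hsigma); lra|exact R1].
    - destruct (Nat.le_exists_sub p n ltac:(lia)) as [k [Hk _]].
      pose proof (Hmain k p Hp) as H. replace (p + k)%nat with n in H by lia.
      assert (sigma (x n) (x p) <= eps/2); [|lra].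
      destruct (HE1 (x p) (x n) (x n) H) as [_ R1]; [rewrite (sig_refl sigma Hsigma); lra|exact R1]. }
  split; [exact Hcau|].
  intros Hcomp. destruct HX as [x0].
  set (x := fix f (n : nat) : X := match n with O => x0 | S k => T (f k) end).
  assert (Hx : forall n, x (S n) = T (x n)) by reflexivity.
  destruct (Hcomp x (Hcau x Hx)) as [l [Hl1 Hl2]].
  assert (Hfix : T l = l).
  { symmetry. apply Hid.
    assert (Hall : forall e, 0 < e -> sigma l (T l) <= e).
    { intros e He. destruct (Hphi e He) as [phi [Hp Hp1]].
      destruct (Hl2 phi Hp) as [N1 HN1].
      destruct (Hl1 phi Hp) as [N2 HN2].
      set (n := max N1 N2).
      pose proof (HN1 (S n) ltac:(unfold n; lia)) as A.
      pose proof (HN2 n ltac:(unfold n; lia)) as B.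
      unfold R_dist in A, B. rewrite Rminus_0_r in A, B.
      rewrite Rabs_right in A by (apply Rle_ge, Hnn).
      rewrite Rabs_right in B by (apply Rle_ge, Hnn).
      pose proof (Hcontr (x n) l) as C. rewrite <- Hx in C.
      assert (0 <= sigma (x n) l) by apply Hnn.
      destruct (Hp1 l (x (S n)) (T l)) as [R1 _]; [lra|nra|exact R1]. }
    pose proof (Hnn l (T l)).
    destruct (Rle_lt_or_eq_dec 0 (sigma l (T l)) H) as [Hp|Hp]; [|lra].
    pose proof (Hall (sigma l (T l) / 2) ltac:(lra)); lra. }
  exists l. split; [exact Hfix|].
  intros q Hq. symmetry. apply Hid.
  pose proof (Hcontr l q) as C. rewrite Hfix, Hq in C.
  pose proof (Hcontr q l) as C2. rewrite Hfix, Hq in C2. pose proof (Hnn q l). destruct Hlam. nra.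
Qed.
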